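(* Let $(X_n,\|\cdot\|_n)_{n\ge1}$ be a sequence of Banach spaces and let $(X,\|\cdot\|)$ be the space defined in the context. (i) Let $m\ge1$ and $x_n\in X_n$ for $n=1,\dots,m$ with $\sum_{n=1}^m\|x_n\|_n>0$. Then there exist $d_1,\dots,d_m\in(0,1]$ such that $\|(x_1,\dots,x_m)\|=\sum_{n=1}^m d_n\|x_n\|_n$. (ii) Let $x=(x_1,x_2,\dots)\in X$ and suppose there exist $c>0$ and $k\in\mathbb{N}$ such that $\frac{\|x_n\|_n}{n}<c\le\|(x_1,\dots,x_k)\|$ for every $n>k$. Then $$\|x\|=\|(x_1,\dots,x_k)\|+\sum_{n=k+1}^\infty\Big(1-\frac1{n+1}\Big)\|x_n\|_n.$$ (iii) Let $x=(x_1,x_2,\dots)$ be a nonzero vector of $X$. Then there exists $k\in\mathbb{N}$ such that $$\|x\|=\|(x_1,\dots,x_k)\|+\sum_{n=k+1}^\infty\Big(1-\frac1{n+1}\Big)\|x_n\|_n.$$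
   Context: $c_{00}((X_n))$ is the vector space of sequences $(x_1,x_2,\dots)$ with $x_k\in X_k$ and only finitely many $x_k\ne0$; $(x_1,\dots,x_n)$ denotes $(x_1,\dots,x_n,0,0,\dots)$. On $c_{00}((X_n))$ define inductively $\|(x_1)\|=\|x_1\|_1$ (the norm of $X_1$) and, for $n\ge2$, $$\|(x_1,\dots,x_n)\|=\Big(1-\tfrac{1}{n+1}\Big)\big(\|x_n\|_n+\|(x_1,\dots,x_{n-1})\|\big)+\tfrac{1}{n+1}\max\Big\{\tfrac{\|x_n\|_n}{n},\ \|(x_1,\dots,x_{n-1})\|\Big\}.$$ $X$ is the completion of $(c_{00}((X_n)),\|\cdot\|)$; since $\frac12\sum\|x_n\|_n\le\|(x_n)\|\le\sum\|x_n\|_n$ on $c_{00}((X_n))$, $X$ is identified with the space of sequences $x=(x_n)$, $x_n\in X_n$, with $\sum_n\|x_n\|_n<\infty$, and $\|x\|=\lim_k\|(x_1,\dots,x_k)\|$. *)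

(* Defs.v *)
From HB Require Import structures.
From mathcomp Require Import all_boot all_order all_algebra.
From mathcomp Require Import all_classical all_reals all_analysis.
Set Implicit Arguments. Unset Strict Implicit. Unset Printing Implicit Defensive.
Import Order.TTheory GRing.Theory Num.Theory.
Import numFieldNormedType.Exports.
Local Open Scope ring_scope.
Local Open Scope classical_set_scope.

(* Sequences x = (x_1, x_2, ...) with x_n in X n (index 0 is unused:
   the paper's spaces are indexed by n >= 1).  The norm of the finitely
   supported vector (x_1, ..., x_n) is [tnorm x n]; it only depends on
   x_1, ..., x_n. *)
Fixpoint tnorm (R : realType) (X : nat -> normedModType R)
    (x : forall n, X n) (n : nat) : R :=
  match n with
  | 0%N => 0
  | S n' =>
    match n' with
    | 0%N => `|x 1%N|
    | S _ =>
      let a := `|x n| in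
      let t := tnorm x n' in
      (1 - (n.+1%:R)^-1) * (a + t) + (n.+1%:R)^-1 * Num.max (a / n%:R) t
    end
  end.

Definition inX (R : realType) (X : nat -> normedModType R)
    (x : forall n, X n) : Prop :=
  cvg ((fun N => \sum_(1 <= k < N) `|x k|) @ \oo).

Definition Xnorm (R : realType) (X : nat -> normedModType R)
    (x : forall n, X n) : R :=
  limn (tnorm x).

(* Main.v *)
Require Import Defs.
From HB Require Import structures.
From mathcomp Require Import all_boot all_order all_algebra.
From mathcomp Require Import all_classical all_reals all_analysis.
From mathcomp Require Import ring lra zify.
From Stdlib Require Import Lia.
Import Order.TTheory GRing.Theory Num.Theory.
Import numFieldNormedType.Exports.
Local Open Scope ring_scope.
Set Implicit Arguments. Unset Strict Implicit.
Local Open Scope classical_set_scope.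

Lemma tnormS (R : realType) (X : nat -> normedModType R) (x : forall n, X n) n :
  (1 <= n)%N ->
  tnorm x n = (1 - (n.+1%:R)^-1) * (`|x n| + tnorm x n.-1)
     + (n.+1%:R)^-1 * Num.max (`|x n| / n%:R) (tnorm x n.-1).
Proof.
case: n => [//|[|m]] _; last by [].
rewrite /= max_l ?divr1 ?addr0 //.
by field.
Qed.

Lemma tnorm_ge0 (R : realType) (X : nat -> normedModType R) (x : forall n, X n) n :
  0 <= tnorm x n.
Proof.
elim: n => [//|n IH]; rewrite tnormS //=.
have w0 : 0 <= (n.+2%:R : R)^-1 by rewrite invr_ge0.
have w1 : (n.+2%:R : R)^-1 <= 1 by rewrite invf_le1 ?ler1n ?ltr0n.
apply: addr_ge0; apply: mulr_ge0 => //.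
- by rewrite subr_ge0.
- by apply: addr_ge0.
- by rewrite le_max IH orbT.
Qed.

Lemma tnorm_incr (R : realType) (X : nat -> normedModType R) (x : forall n, X n) n :
  tnorm x n <= tnorm x n.+1.
Proof.
rewrite [X in _ <= X]tnormS //=.
set w := (n.+2%:R : R)^-1.
have w0 : 0 <= w by rewrite invr_ge0.
have w1 : w <= 1 by rewrite invf_le1 ?ler1n ?ltr0n.
have hm : tnorm x n <= Num.max (`|x n.+1| / n.+1%:R) (tnorm x n) by rewrite le_max lexx orbT.
have ha : 0 <= `|x n.+1| by [].
nra.
Qed.

Lemma tnorm_mono (R : realType) (X : nat -> normedModType R) (x : forall n, X n) :
  nondecreasing_seq (tnorm x).
Proof. by apply/nondecreasing_seqP => n; apply: tnorm_incr. Qed.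

Lemma tnorm_coef (R : realType) (X : nat -> normedModType R) (x : forall n, X n) m :
  exists d : nat -> R,
    (forall n, (1 <= n <= m)%N -> 0 < d n <= 1) /\
    tnorm x m = \sum_(1 <= n < m.+1) d n * `|x n|.
Proof.
elim: m => [|m [d [hd he]]].
  by exists (fun _ => 1); split => [n /andP[a b]|]; [lia| rewrite big_geq].
have w0 : 0 < (m.+2%:R : R)^-1 by rewrite invr_gt0.
have w1 : (m.+2%:R : R)^-1 < 1 by rewrite invf_lt1 ?ltr1n ?ltr0n.
have m0 : 0 < (m.+1%:R : R) by rewrite ltr0n.
have m1 : 1 <= (m.+1%:R : R) by rewrite ler1n.
set w := (m.+2%:R : R)^-1 in w0 w1.
rewrite tnormS //= -/w.
have [hle|hlt] := leP (`|x m.+1| / m.+1%:R) (tnorm x m).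
-   exists (fun n => if n == m.+1 then 1 - w else d n); split.
    move=> n /andP[n1 nm]; case: eqP => [_|ne]; first by rewrite subr_gt0 w1 lerBlDr lerDl ltW.
    by apply: hd; apply/andP; split => //; rewrite leq_eqVlt in nm; case/orP: nm => // /eqP.
  rewrite big_nat_recr //= eqxx.
  rewrite (eq_big_nat _ _ (F2 := fun n => d n * `|x n|)); last first.
    by move=> i /andP[_ hi]; rewrite (ltn_eqF hi).
  rewrite -he; ring.
- exists (fun n => if n == m.+1 then 1 - w + w / m.+1%:R else (1 - w) * d n); split.
    move=> n /andP[n1 nm]; case: eqP => [_|ne].
      have q0 : 0 <= w / m.+1%:R by rewrite divr_ge0 // ltW.
      have q1 : w / m.+1%:R <= w by rewrite ler_pdivrMr // ler_peMr // ltW.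
      move: q0 q1; generalize (w / m.+1%:R) => q q0 q1; clearbody w; apply/andP; split; lra.
    have : (1 <= n <= m)%N by apply/andP; split => //; rewrite leq_eqVlt in nm; case/orP: nm => // /eqP.
    move/hd => /andP[d0 d1]; apply/andP; split; first by rewrite mulr_gt0 // subr_gt0.
    nra.
  rewrite big_nat_recr //= eqxx.
  rewrite (eq_big_nat _ _ (F2 := fun n => (1 - w) * (d n * `|x n|))); last first.
    by move=> i /andP[_ hi]; rewrite (ltn_eqF hi) mulrA.
  rewrite -mulr_sumr -he; ring.
Qed.

Lemma tnorm_tail (R : realType) (X : nat -> normedModType R) (x : forall n, X n) c k :
  c <= tnorm x k -> (forall n, (k < n)%N -> `|x n| / n%:R < c) ->
  forall j, tnorm x (k + j) = tnorm x k +
    \sum_(k.+1 <= n < (k + j).+1) ((1 - (n.+1%:R)^-1) * `|x n|).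
Proof.
move=> ck hc; elim => [|j IH].
  by rewrite addn0 big_geq // addr0.
rewrite addnS tnormS //= big_nat_recr //=; last by lia.
have hm : `|x (k + j).+1| / (k + j).+1%:R <= tnorm x (k + j).
  apply: ltW; apply: (lt_le_trans (hc _ _)); first by lia.
  apply: (le_trans ck); apply: tnorm_mono; lia.
rewrite max_r // IH; ring.
Qed.

Lemma P_mono (R : realType) (X : nat -> normedModType R) (x : forall n, X n) :
  nondecreasing_seq (fun N => \sum_(1 <= n < N) `|x n|).
Proof.
apply/nondecreasing_seqP => n.
case: n => [|n]; first by rewrite !big_geq.
by rewrite [X in _ <= X]big_nat_recr //= lerDl.
Qed.

Lemma tnorm_cvg (R : realType) (X : nat -> normedModType R) (x : forall n, X n) :
  inX x -> cvgn (tnorm x).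
Proof.
move=> hx; apply: nondecreasing_is_cvgn; first exact: tnorm_mono.
exists (limn (fun N => \sum_(1 <= n < N) `|x n|)) => _ [N _ <-].
apply: (le_trans _ (nondecreasing_cvgn_le (@P_mono _ _ x) hx N.+1)).
have [d [hd ->]] := tnorm_coef x N.
apply: ler_sum_nat => i /andP[i1 iN].
have /andP[_ d1] : 0 < d i <= 1 by apply: hd; apply/andP; split => //; lia.
by rewrite ler_piMl.
Qed.

Lemma part2 (R : realType) (X : nat -> normedModType R) (x : forall n, X n) c k :
  inX x -> c <= tnorm x k -> (forall n, (k < n)%N -> `|x n| / n%:R < c) ->
  Xnorm x = tnorm x k +
       \big[+%R/0%R]_(k.+1 <= n <oo) ((1 - (n.+1%:R)^-1) * `|x n|).
Proof.
move=> hx ck hc.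
have tc := tnorm_cvg hx.
set l := Xnorm x.
have h1 : (fun n => tnorm x (n + k)) @ \oo --> l by rewrite (cvg_shiftn k).
have h2 : (fun n => tnorm x (n + k) - tnorm x k) @ \oo --> l - tnorm x k.
  by apply: cvgB => //; apply: cvg_cst.
have h3 : (fun N => \sum_(k.+1 <= n < N) ((1 - (n.+1%:R)^-1) * `|x n|)) @ \oo --> l - tnorm x k.
  rewrite -(cvg_shiftn k.+1); apply: (cvg_trans _ h2).
  apply: near_eq_cvg; apply: nearW => n /=.
  by rewrite addnS addnC (tnorm_tail ck hc n) addrAC subrr add0r.
by rewrite (cvg_lim _ h3) // addrC subrK.
Qed.

Lemma tnorm_pos (R : realType) (X : nat -> normedModType R) (x : forall n, X n) n :
  (1 <= n)%N -> x n <> 0 -> 0 < tnorm x n.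
Proof.
move=> n1 xn; rewrite tnormS //.
have a0 : 0 < `|x n| by rewrite normr_gt0; apply/eqP.
have w0 : 0 < (n.+1%:R : R)^-1 by rewrite invr_gt0 ltr0n.
have w1 : (n.+1%:R : R)^-1 < 1 by rewrite invf_lt1 ?ltr1n ?ltr0n.
have t0 := tnorm_ge0 x n.-1.
have hm : 0 <= Num.max (`|x n| / n%:R) (tnorm x n.-1) by rewrite le_max t0 orbT.
move: hm; generalize (Num.max (`|x n| / n%:R) (tnorm x n.-1)) => M hm.
have p1 : 0 < (1 - (n.+1%:R : R)^-1) * (`|x n| + tnorm x n.-1) by rewrite mulr_gt0 // ?subr_gt0 // ltr_pwDl.
have p2 : 0 <= (n.+1%:R : R)^-1 * M by rewrite mulr_ge0 // ltW.
by apply: (lt_le_trans p1); rewrite lerDl.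
Qed.

Lemma part3 (R : realType) (X : nat -> normedModType R) (x : forall n, X n) :
  inX x -> (exists n, (1 <= n)%N /\ x n <> 0) ->
     exists k : nat, (1 <= k)%N /\
       Xnorm x = tnorm x k +
         \big[+%R/0%R]_(k.+1 <= n <oo) ((1 - (n.+1%:R)^-1) * `|x n|).
Proof.
move=> hx [n0 [n01 xn0]].
have c0 := tnorm_pos n01 xn0.
have hs : cvgn (series (fun n => `|x n|)).
  by rewrite -(is_cvg_series_restrict 1).
have h0 := cvg_series_cvg_0 hs.
have := cvgr0_norm_lt _ h0 _ c0.
move=> [K _ HK].
exists (maxn K n0); split; first by lia.
apply: (part2 hx (c := tnorm x n0)).
  by apply: tnorm_mono; lia.
move=> n hn.
have n1 : (1 <= (n%:R : R)) by rewrite ler1n; lia.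
have := HK n; rewrite /= normr_id => /(_ _) lt; apply: le_lt_trans (lt _).
  by rewrite ler_pdivrMr ?ler_peMr // (lt_le_trans ltr01).
lia.
Qed.

Unset Implicit Arguments.
Local Close Scope classical_set_scope.

Theorem proposition1p5 (R : realType) (X : nat -> completeNormedModType R) :
  (* (i) *)
  (forall (m : nat) (x : forall n, X n),
     (1 <= m)%N ->
     0 < \sum_(1 <= n < m.+1) `|x n| ->
     exists d : nat -> R,
       (forall n, (1 <= n <= m)%N -> 0 < d n <= 1) /\
       tnorm x m = \sum_(1 <= n < m.+1) d n * `|x n|) /\
  (* (ii) *)
  (forall (x : forall n, X n) (c : R) (k : nat),
     inX x -> 0 < c -> c <= tnorm x k ->
     (forall n, (k < n)%N -> `|x n| / n%:R < c) ->
     Xnorm x = tnorm x k +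
       \big[+%R/0%R]_(k.+1 <= n <oo) ((1 - (n.+1%:R)^-1) * `|x n|)) /\
  (* (iii) *)
  (forall x : forall n, X n,
     inX x -> (exists n, (1 <= n)%N /\ x n <> 0) ->
     exists k : nat, (1 <= k)%N /\
       Xnorm x = tnorm x k +
         \big[+%R/0%R]_(k.+1 <= n <oo) ((1 - (n.+1%:R)^-1) * `|x n|)).
Proof.
split; first by move=> m x _ _; exact: tnorm_coef.
split; first by move=> x c k hx _ ck hc; exact: part2 hx ck hc.
by move=> x hx hn; exact: part3.
Qed.
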